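(* Let $n\ge1$ and fix $\beta\in\partial\mathbb{D}$. On the manifold $\mathbb{D}^{n-1}$ of Verblunsky coefficients $(\alpha_0,\dots,\alpha_{n-2})$ with the Poisson bracket described in the context, let $P_n,Q_n,C_n,S_n$ be as in the context. Then for all $z,w$: \[ \{C_n(z),C_n(w)\}=0=\{S_n(z),S_n(w)\},\qquad \{C_n(z),S_n(w)\}=-i\,\frac{C_n(z)\,wS_n(w)-C_n(w)\,zS_n(z)}{z-w}, \] \[ \{P_n(z),P_n(w)\}=0=\{Q_n(z),Q_n(w)\}, \] \[ \{P_n(z),Q_n(w)\}=-\frac{i}{2}\Bigl[\bigl(P_n(z)Q_n(w)-P_n(w)Q_n(z)\bigr)\frac{z+w}{z-w}-Q_n(z)Q_n(w)+P_n(z)P_n(w)\Bigr]. \]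
   Context: Let $\rho_j=(1-|\alpha_j|^2)^{1/2}$. The Poisson bracket of (complex-valued) smooth functions of $\alpha_0,\dots,\alpha_{n-2}$ is $\{f,g\}=\sum_{j=0}^{n-2}i\rho_j^2\bigl(\frac{\partial f}{\partial\bar\alpha_j}\frac{\partial g}{\partial\alpha_j}-\frac{\partial f}{\partial\alpha_j}\frac{\partial g}{\partial\bar\alpha_j}\bigr)$ with Wirtinger derivatives; equivalently $\{\alpha_j,\alpha_k\}=\{\bar\alpha_j,\bar\alpha_k\}=0$, $\{\alpha_j,\bar\alpha_k\}=-i\rho_j^2\delta_{jk}$. Auxiliary variables $z,w$ are held fixed. The monic OPUC satisfy $\Phi_0=1$, $\Phi_{k+1}(z)=z\Phi_k(z)-\bar\alpha_k\Phi_k^*(z)$ with $\Phi_k^*(z)=z^k\overline{\Phi_k(1/\bar z)}$; $\Psi_k$ satisfies the same recursion with $\alpha_j$ replaced by $-\alpha_j$. Then $P_n(z)=z\Phi_{n-1}(z)-\bar\beta\Phi_{n-1}^*(z)$, $Q_n(z)=z\Psi_{n-1}(z)+\bar\beta\Psi_{n-1}^*(z)$, $C_n=\tfrac12(P_n+Q_n)$, $S_n=\tfrac12(P_n-Q_n)$. Identities with difference quotients are identities of polynomials in $z,w$. *)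

(* Defs.v *)
From HB Require Import structures.
From mathcomp Require Import all_boot all_order all_algebra.
From mathcomp Require Import mpoly.
Set Implicit Arguments. Unset Strict Implicit. Unset Printing Implicit Defensive.
Import Order.TTheory GRing.Theory Num.Theory.
Local Open Scope ring_scope.

(* Throughout, m = n-1 is the number of Verblunsky coefficients
   alpha_0, ..., alpha_(m-1).  Functions of the alphas (and of the auxiliary
   variables z, w) are polynomials in the formal variables
     alpha_j  = 'X_(2j),   conj(alpha_j) = 'X_(2j+1)   (j < m),
     z = 'X_(2m),          w = 'X_(2m+1)
   over a field C of complex numbers (numClosedFieldType). *)

Section OPUC.
Variable C : numClosedFieldType.
Variable m : nat.

Definition NV := m.*2.+2.
Definition M := {mpoly C[NV]}.

Definition va (j : nat) : 'I_NV := inord (j.*2).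
Definition vb (j : nat) : 'I_NV := inord (j.*2.+1).
Definition vz : 'I_NV := inord (m.*2).
Definition vw : 'I_NV := inord (m.*2.+1).

Definition alpha (j : nat) : M := 'X_(va j).
Definition zz : M := 'X_vz.
Definition ww : M := 'X_vw.

(* complex conjugation of functions: conjugate the coefficients and
   exchange alpha_j <-> conj(alpha_j); z, w are fixed (not conjugated) *)
Definition swapv (i : 'I_NV) : M :=
  if (i < m.*2)%N then 'X_(inord (if odd i then i.-1 else i.+1) : 'I_NV)
  else 'X_i.
Definition cj (p : M) : M := mmap (fun c : C => (Num.conj c)%:MP) swapv p.

(* Poisson bracket, with Wirtinger derivatives d/d alpha_j = mderiv (va j),
   d/d conj(alpha_j) = mderiv (vb j), and rho_j^2 = 1 - alpha_j conj(alpha_j) *)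
Definition pbr (f g : M) : M :=
  \sum_(j < m)
    'i%:MP * (1 - alpha j * cj (alpha j)) *
      (mderiv (vb j) f * mderiv (va j) g - mderiv (va j) f * mderiv (vb j) g).

(* Phi^*_k for a polynomial Phi (of degree <= k) in the variable z:
   z^k conj(Phi(1/conj z)) = sum_i conj(Phi_(k-i)) z^i *)
Definition rstar (k : nat) (p : {poly M}) : {poly M} :=
  \poly_(i < k.+1) cj (p`_(k - i)).

(* monic OPUC; s = 1 gives Phi_k, s = -1 gives Psi_k (alpha_j -> -alpha_j,
   hence conj(alpha_j) -> -conj(alpha_j)) *)
Fixpoint opuc (s : C) (k : nat) : {poly M} :=
  match k with
  | 0 => 1
  | k'.+1 => 'X * opuc s k' - (cj (s%:MP * alpha k'))%:P * rstar k' (opuc s k')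
  end.

Definition Phi k := opuc 1 k.
Definition Psi k := opuc (-1) k.

Definition Pn (beta : C) : {poly M} :=
  'X * Phi m - (Num.conj beta)%:MP%:P * rstar m (Phi m).
Definition Qn (beta : C) : {poly M} :=
  'X * Psi m + (Num.conj beta)%:MP%:P * rstar m (Psi m).
Definition Cn (beta : C) : {poly M} := (2^-1 : C)%:MP%:P * (Pn beta + Qn beta).
Definition Sn (beta : C) : {poly M} := (2^-1 : C)%:MP%:P * (Pn beta - Qn beta).

End OPUC.

(* Main.v *)
Require Import Defs.
From HB Require Import structures.
From mathcomp Require Import all_boot all_order all_algebra.
From mathcomp Require Import mpoly ring zify.
Set Implicit Arguments. Unset Strict Implicit. Unset Printing Implicit Defensive.
Import Order.TTheory GRing.Theory Num.Theory.
Local Open Scope ring_scope.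

Section S.
Variable C : numClosedFieldType.
Variable m : nat.
Local Notation M := (M C m).

Definition fc : {rmorphism C -> M} := (@mpolyC (NV m) C \o Num.conj)%FUN.
Lemma cjE (p : M) : cj p = mmap fc (@swapv C m) p.
Proof. by []. Qed.

Lemma cjD (p q : M) : cj (p + q) = cj p + cj q.
Proof. by rewrite !cjE rmorphD. Qed.
Lemma cjM (p q : M) : cj (p * q) = cj p * cj q.
Proof. by rewrite !cjE rmorphM. Qed.
Lemma cjC (c : C) : cj (c%:MP : M) = (Num.conj c)%:MP.
Proof. by rewrite cjE mmapC. Qed.
Lemma cjX (i : 'I_(NV m)) : cj 'X_i = @swapv C m i.
Proof. by rewrite cjE mmapX mmap1U. Qed.
Lemma test (a b : M) : (a + b) * (a - b) = a*a - b*b.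
Proof. ring. Qed.
Lemma cjN (p : M) : cj (- p) = - cj p.
Proof. by rewrite !cjE rmorphN. Qed.
Lemma cjB (p q : M) : cj (p - q) = cj p - cj q.
Proof. by rewrite !cjE rmorphB. Qed.
Lemma cj1 : cj (1 : M) = 1.
Proof. by rewrite cjE rmorph1. Qed.

Lemma cjXX (i : 'I_(NV m)) : cj (cj ('X_i : M)) = 'X_i.
Proof.
rewrite cjX /swapv; case: ifP => hi; last by rewrite cjX /swapv hi.
rewrite cjX /swapv.
set j := inord _.
have hj : (j : nat) = (if odd i then i.-1 else i.+1).
  rewrite /j inordK //.
  clear j; case: (odd i) => /=; lia.
have hj2 : (j < m.*2)%N.
  rewrite hj; case: ifP => hoi; first lia.
  have : i.+1 != m.*2 by apply/eqP => e; move: (odd_double m); rewrite -e /= hoi.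
  lia.
rewrite hj2; congr 'X_(_); apply: val_inj => /=.
have e : (if odd j then j.-1 else j.+1) = i.
  rewrite hj; case hoi: (odd i) => /=.
    have pos : (0 < i)%N by case: (nat_of_ord i) hoi.
    have : odd i.-1 = false.
      by move: hoi; rewrite -{1}(prednK pos) /=; case: (odd i.-1).
    by move=> ->; rewrite prednK.
  by rewrite hoi.
by rewrite e inordK.
Qed.
Lemma cj_sum (I : Type) (r : seq I) (G : I -> M) :
  cj (\sum_(i <- r) G i) = \sum_(i <- r) cj (G i).
Proof. exact: (raddf_sum (mmap fc (@swapv C m))). Qed.
Lemma cj_prod (I : Type) (r : seq I) (G : I -> M) :
  cj (\prod_(i <- r) G i) = \prod_(i <- r) cj (G i).
Proof. exact: (rmorph_prod (mmap fc (@swapv C m))). Qed.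
Lemma cjXn (p : M) k : cj (p ^+ k) = cj p ^+ k.
Proof. exact: (rmorphXn (mmap fc (@swapv C m))). Qed.

Lemma cjK (p : M) : cj (cj p) = p.
Proof.
pose s := msupp p; pose F mm := p@_mm *: ('X_[mm] : M).
have E : p = \sum_(mm <- s) F mm := mpolyE p.
rewrite {1}E [RHS]E.
rewrite [cj (\sum_(mm <- s) F mm)]cj_sum cj_sum; apply: eq_bigr => mm _.
rewrite /F -mul_mpolyC !cjM !cjC conjCK; congr (_ * _).
rewrite mpolyXE_id !cj_prod; apply: eq_bigr => i _.
by rewrite [cj ('X_i ^+ _)]cjXn cjXn cjXX.
Qed.

Local Notation a j := (alpha C m j).
Local Notation b j := ('X_(vb m j) : M).
Local Notation z := (zz C m).
Local Notation w := (ww C m).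

Lemma val_va j : (j <= m)%N -> (va m j : nat) = j.*2.
Proof. by move=> h; rewrite /va inordK //; lia. Qed.
Lemma val_vb j : (j <= m)%N -> (vb m j : nat) = j.*2.+1.
Proof. by move=> h; rewrite /vb inordK //; lia. Qed.
Lemma val_vz : (vz m : nat) = m.*2.
Proof. by rewrite /vz inordK //; lia. Qed.
Lemma val_vw : (vw m : nat) = m.*2.+1.
Proof. by rewrite /vw inordK //; lia. Qed.

Lemma dX (i j : 'I_(NV m)) : mderiv i ('X_j : M) = (j == i)%:R.
Proof.
rewrite mderivX mnm1E; case: eqP => [->|_]; last by rewrite scale0r.
have -> : (U_(i) - U_(i) = 0)%MM by apply/mnmP => k; rewrite !mnmE subnn.
by rewrite mpolyX0 scale1r.
Qed.

Lemma cja j : (j < m)%N -> cj (a j) = b j.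
Proof.
move=> h; rewrite /alpha cjX /swapv val_va; last lia.
by rewrite ifT; [rewrite odd_double | lia].
Qed.
Lemma cjb j : (j < m)%N -> cj (b j) = a j.
Proof. by move=> h; rewrite -cja // cjK. Qed.

Definition indep j (p : M) := mderiv (va m j) p = 0 /\ mderiv (vb m j) p = 0.

Lemma indepC j c : indep j (c%:MP).
Proof. by split; rewrite mderivC. Qed.
Lemma indep0 j : indep j 0.
Proof. by split; rewrite mderiv0. Qed.
Lemma indep1 j : indep j 1.
Proof. by rewrite -mpolyC1; apply: indepC. Qed.
Lemma indepD j p q : indep j p -> indep j q -> indep j (p + q).
Proof. by move=> [h1 h2] [h3 h4]; split; rewrite mderivD ?h1 ?h2 ?h3 ?h4 addr0. Qed.
Lemma indepN j p : indep j p -> indep j (- p).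
Proof. by move=> [h1 h2]; split; rewrite mderivN ?h1 ?h2 oppr0. Qed.
Lemma indepM j p q : indep j p -> indep j q -> indep j (p * q).
Proof. by move=> [h1 h2] [h3 h4]; split; rewrite mderivM ?h1 ?h2 ?h3 ?h4 mul0r mulr0 addr0. Qed.
Lemma indepB j p q : indep j p -> indep j q -> indep j (p - q).
Proof. by move=> h1 h2; apply: indepD => //; apply: indepN. Qed.

Lemma dX0 (i j : 'I_(NV m)) : (j : nat) != i -> mderiv i ('X_j : M) = 0.
Proof.
move=> h; rewrite dX; have /negbTE -> : j != i.
  by apply: contra h => /eqP ->.
by [].
Qed.

Lemma indep_z j : (j < m)%N -> indep j z.
Proof. by move=> h; split; apply: dX0; rewrite val_vz ?val_va ?val_vb //; lia. Qed.
Lemma indep_w j : (j < m)%N -> indep j w.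
Proof. by move=> h; split; apply: dX0; rewrite val_vw ?val_va ?val_vb //; lia. Qed.
Lemma indep_a j k : (j < m)%N -> (k < m)%N -> j != k -> indep j (a k).
Proof. by move=> hj hk hjk; split; apply: dX0; rewrite ?val_va ?val_vb //; lia. Qed.
Lemma indep_b j k : (j < m)%N -> (k < m)%N -> j != k -> indep j (b k).
Proof. by move=> hj hk hjk; split; apply: dX0; rewrite ?val_va ?val_vb //; lia. Qed.
Lemma da_a k : (k < m)%N -> mderiv (va m k) (a k) = 1.
Proof. by move=> h; rewrite /alpha dX eqxx. Qed.
Lemma db_b k : (k < m)%N -> mderiv (vb m k) (b k) = 1.
Proof. by move=> h; rewrite dX eqxx. Qed.
Lemma db_a k : (k < m)%N -> mderiv (vb m k) (a k) = 0.
Proof. by move=> h; apply: dX0; rewrite ?val_va ?val_vb //; lia. Qed.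
Lemma da_b k : (k < m)%N -> mderiv (va m k) (b k) = 0.
Proof. by move=> h; apply: dX0; rewrite ?val_va ?val_vb //; lia. Qed.

Lemma opucS (s : C) k : (k < m)%N -> Num.conj s = s ->
  opuc m s k.+1 = 'X * opuc m s k - (s%:MP * b k)%:P * rstar k (opuc m s k).
Proof. by move=> hk hs /=; rewrite cjM cjC hs cja. Qed.

Lemma coef_opuc_hi (s : C) k i : (k <= m)%N -> Num.conj s = s -> (k < i)%N -> (opuc m s k)`_i = 0.
Proof.
elim: k i => [|k IH] i hk hs hi.
  by rewrite /= coef1; case: i hi.
rewrite opucS //.
rewrite coefB coefXM coefCM /rstar coef_poly.
case: i hi => [//|i] hi /=.
rewrite IH //; last lia.
by rewrite ltnNge (_ : (k < i.+1)%N) /= ?mulr0 ?subr0 //; lia.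
Qed.

Lemma cj0 : cj (0 : M) = 0.
Proof. by rewrite cjE rmorph0. Qed.

Lemma rstarS (s : C) k : (k < m)%N -> Num.conj s = s ->
  rstar k.+1 (opuc m s k.+1) = rstar k (opuc m s k) - (s%:MP * a k)%:P * ('X * opuc m s k).
Proof.
move=> hk hs; apply/polyP => i.
rewrite coefB coefCM coefXM /rstar !coef_poly opucS //.
have ecj : cj (s%:MP * b k) = s%:MP * a k by rewrite cjM cjC hs cjb.
case: (ltnP i k.+2) => hi2.
  rewrite coefB coefXM coefCM coef_poly cjB cjM ecj.
  case: i hi2 => [|i] hi2 /=.
    by rewrite !subn0 ltnn /= cj0 !mulr0 !subr0.
  rewrite subSS; case: (ltngtP i k) => hik.
  - have -> : (k - i == 0)%N = false by apply/negbTE; rewrite subn_eq0 -ltnNge.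
    rewrite (_ : (k - i < k.+1)%N) ?(_ : (i < k)%N) //; last lia.
    rewrite (_ : (k - (k - i) = i)%N); last lia.
    by rewrite cjK ltnS hik subnS.
  - lia.
  - subst i; rewrite subnn /= cj0 ltnn subn0 cjK; ring.
rewrite (@coef_opuc_hi s k i.-1); [| lia | by [] | lia].
rewrite (_ : (i < k.+1)%N = false); last lia.
by case: (i == 0%N); rewrite mulr0 subr0.
Qed.
Fixpoint chain (k : nat) (x0 : M * M) (t : M) : M * M :=
  match k with
  | 0 => x0
  | k'.+1 => let x := chain k' x0 t in
      (t * x.1 + (- b k') * x.2, (- (a k' * t)) * x.1 + 1 * x.2)
  end.

Lemma opuc_chain (s : C) k (t : M) : (k <= m)%N -> Num.conj s = s -> s * s = 1 ->
  ((opuc m s k).[t], s%:MP * (rstar k (opuc m s k)).[t]) = chain k (1, s%:MP) t.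
Proof.
move=> hk hs hss; elim: k hk => [|k IH] hk.
  rewrite /= /rstar horner_poly big_ord1 expr0 mulr1 hornerC coefC /= cj1.
  by rewrite mulr1.
have hk' : (k < m)%N by [].
rewrite rstarS // opucS // /= -IH; last lia.
congr (_, _); rewrite !hornerE /=.
  ring.
have hss' : s%:MP * s%:MP = 1 :> M by rewrite -mpolyCM hss mpolyC1.
set F := (opuc m s k).[t]; set G := (rstar k (opuc m s k)).[t].
apply/eqP; rewrite -subr_eq0; apply/eqP.
transitivity ((1 - s%:MP * s%:MP) * (a k * t * F)); first ring.
by rewrite hss' subrr mul0r.
Qed.

Lemma chain_lin k (p1 p2 : M) t :
  chain k (p1, p2) t =
  (p1 * (chain k (1, 0) t).1 + p2 * (chain k (0, 1) t).1,
   p1 * (chain k (1, 0) t).2 + p2 * (chain k (0, 1) t).2).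
Proof.
elim: k => [|k IH] /=; first by congr (_, _); ring.
rewrite IH /=; congr (_, _); ring.
Qed.

Definition pbrk k (f g : M) : M :=
  \sum_(j < k) 'i%:MP * (1 - a j * b j) *
    (mderiv (vb m j) f * mderiv (va m j) g - mderiv (va m j) f * mderiv (vb m j) g).

Lemma pbr_pbrk f g : pbr f g = pbrk m f g.
Proof. by apply: eq_bigr => j _; rewrite cja. Qed.

Lemma pbrkS k f g : pbrk k.+1 f g = pbrk k f g + 'i%:MP * (1 - a k * b k) *
    (mderiv (vb m k) f * mderiv (va m k) g - mderiv (va m k) f * mderiv (vb m k) g).
Proof. by rewrite /pbrk big_ord_recr. Qed.

Lemma pbrk0 f g : pbrk 0 f g = 0.
Proof. by rewrite /pbrk big_ord0. Qed.

Lemma pbrkDl k f1 f2 g : pbrk k (f1 + f2) g = pbrk k f1 g + pbrk k f2 g.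
Proof. rewrite /pbrk -big_split; apply: eq_bigr => j _ /=; rewrite !mderivD; ring. Qed.
Lemma pbrkDr k f g1 g2 : pbrk k f (g1 + g2) = pbrk k f g1 + pbrk k f g2.
Proof. rewrite /pbrk -big_split; apply: eq_bigr => j _ /=; rewrite !mderivD; ring. Qed.
Lemma pbrkNl k f g : pbrk k (- f) g = - pbrk k f g.
Proof. rewrite /pbrk -sumrN; apply: eq_bigr => j _ /=; rewrite !mderivN; ring. Qed.
Lemma pbrkNr k f g : pbrk k f (- g) = - pbrk k f g.
Proof. rewrite /pbrk -sumrN; apply: eq_bigr => j _ /=; rewrite !mderivN; ring. Qed.
Lemma pbrk_anti k f g : pbrk k f g = - pbrk k g f.
Proof. rewrite /pbrk -sumrN; apply: eq_bigr => j _ /=; ring. Qed.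

Lemma pbrkMl k c f g : (forall j, (j < k)%N -> indep j c) ->
  pbrk k (c * f) g = c * pbrk k f g.
Proof.
move=> hc; rewrite /pbrk mulr_sumr; apply: eq_bigr => j _.
have [h1 h2] := hc j (ltn_ord j).
rewrite !mderivM h1 h2; ring.
Qed.
Lemma pbrkMr k c f g : (forall j, (j < k)%N -> indep j c) ->
  pbrk k f (c * g) = c * pbrk k f g.
Proof.
move=> hc; rewrite /pbrk mulr_sumr; apply: eq_bigr => j _.
have [h1 h2] := hc j (ltn_ord j).
rewrite !mderivM h1 h2; ring.
Qed.

Lemma pbrk_lin k c1 c2 d1 d2 f1 f2 g1 g2 :
  (forall j, (j < k)%N -> indep j c1) -> (forall j, (j < k)%N -> indep j c2) ->
  (forall j, (j < k)%N -> indep j d1) -> (forall j, (j < k)%N -> indep j d2) ->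
  pbrk k (c1 * f1 + c2 * f2) (d1 * g1 + d2 * g2) =
  c1 * d1 * pbrk k f1 g1 + c1 * d2 * pbrk k f1 g2 +
  c2 * d1 * pbrk k f2 g1 + c2 * d2 * pbrk k f2 g2.
Proof.
move=> h1 h2 h3 h4.
rewrite pbrkDl !pbrkDr !pbrkMl // !pbrkMr //; ring.
Qed.

Lemma chain_indep k x0 t j : (k <= j)%N -> (j < m)%N ->
  indep j x0.1 -> indep j x0.2 -> indep j t ->
  indep j (chain k x0 t).1 /\ indep j (chain k x0 t).2.
Proof.
move=> hkj hj h1 h2 ht; elim: k hkj => [|k IH] hkj //=.
have [i1 i2] := IH (ltnW hkj).
have hb : indep j (b k) by apply: indep_b => //; [lia | rewrite neq_ltn hkj orbT].
have ha : indep j (a k) by apply: indep_a => //; [lia | rewrite neq_ltn hkj orbT].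
split; repeat (apply: indepD || apply: indepM || apply: indepN || apply: indep1) => //.
Qed.

Lemma dd1 i : mderiv i (1 : M) = 0.
Proof. by rewrite -mpolyC1 mderivC. Qed.

Lemma chain_dS k x0 t : (k < m)%N ->
  indep k x0.1 -> indep k x0.2 -> indep k t ->
  [/\ mderiv (va m k) (chain k.+1 x0 t).1 = 0,
      mderiv (vb m k) (chain k.+1 x0 t).1 = - (chain k x0 t).2,
      mderiv (va m k) (chain k.+1 x0 t).2 = - (t * (chain k x0 t).1) &
      mderiv (vb m k) (chain k.+1 x0 t).2 = 0].
Proof.
move=> hk h1 h2 [t1 t2].
have [[x1 x1'] [x2 x2']] := chain_indep (leqnn k) hk h1 h2 (conj t1 t2).
rewrite /=; split; rewrite !(mderivD, mderivM, mderivN) ?x1 ?x2 ?x1' ?x2' ?t1 ?t2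
  ?da_a ?db_a ?da_b ?db_b ?dd1 //; try ring.
Qed.

Lemma lin_comb (u B11 B12 B21 B22 R11 R12 R21 R22 e11 e12 e21 e22 T L : M) :
  u * B11 = R11 -> u * B12 = R12 -> u * B21 = R21 -> u * B22 = R22 ->
  e11 * R11 + e12 * R12 + e21 * R21 + e22 * R22 + u * T = L ->
  u * (e11 * B11 + e12 * B12 + e21 * B21 + e22 * B22 + T) = L.
Proof. move=> <- <- <- <- <-; ring. Qed.

Lemma lin_comb0 (u B11 B12 B21 B22 R11 R12 R21 R22 e11 e12 e21 e22 L : M) :
  u * B11 = R11 -> u * B12 = R12 -> u * B21 = R21 -> u * B22 = R22 ->
  e11 * R11 + e12 * R12 + e21 * R21 + e22 * R22 = L ->
  u * (e11 * B11 + e12 * B12 + e21 * B21 + e22 * B22) = L.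
Proof. move=> <- <- <- <- <-; ring. Qed.

Ltac ind := move=> ? ?; repeat first [apply: indepN | apply: indepM | apply: indepD
  | apply: indep1 | apply: indep_z | apply: indep_w | apply: indep_a | apply: indep_b ]; try lia.

Lemma main k (p1 p2 q1 q2 : M) : (k <= m)%N ->
  (forall j, (j < m)%N -> [/\ indep j p1, indep j p2, indep j q1 & indep j q2]) ->
  let X := chain k (p1, p2) z in let Y := chain k (q1, q2) w in
  let cz := chain k (1, 0) z in let sz := chain k (0, 1) z in
  let cw := chain k (1, 0) w in let sw := chain k (0, 1) w in
  let d0 := p1 * q2 - p2 * q1 in let d := X.1 * Y.2 - X.2 * Y.1 in
  [/\ (z - w) * pbrk k X.1 Y.1 = - 'i%:MP * d0 * (w * cz.1 * sw.1 - z * sz.1 * cw.1),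
      (z - w) * pbrk k X.1 Y.2 = 'i%:MP * d * w - 'i%:MP * d0 * (w * cz.1 * sw.2 - z * sz.1 * cw.2),
      (z - w) * pbrk k X.2 Y.1 = - 'i%:MP * d * z - 'i%:MP * d0 * (w * cz.2 * sw.1 - z * sz.2 * cw.1) &
      (z - w) * pbrk k X.2 Y.2 = - 'i%:MP * d0 * (w * cz.2 * sw.2 - z * sz.2 * cw.2)].
Proof.
move=> + hp; elim: k => [|k IH] hk /=.
  by rewrite !pbrk0; split; ring.
have hk' : (k < m)%N by [].
have [E11 E12 E21 E22] := IH (ltnW hk).
have [i1 i2 i3 i4] := hp k hk'.
have [Dx1 Dx2 Dx3 Dx4] := @chain_dS k (p1, p2) z hk' i1 i2 (indep_z hk').
have [Dy1 Dy2 Dy3 Dy4] := @chain_dS k (q1, q2) w hk' i3 i4 (indep_w hk').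
simpl in Dx1, Dx2, Dx3, Dx4, Dy1, Dy2, Dy3, Dy4.
split; rewrite pbrkS pbrk_lin; try ind;
  rewrite ?Dx1 ?Dx2 ?Dx3 ?Dx4 ?Dy1 ?Dy2 ?Dy3 ?Dy4;
  (apply: lin_comb; [exact: E11 | exact: E12 | exact: E21 | exact: E22 | ring]).
Qed.

Lemma zw_neq0 : z - w != 0.
Proof.
rewrite subr_eq0; apply/eqP => e.
have := congr1 (mcoeff U_(vz m)) e; rewrite !mcoeffX eqxx.
have -> : (U_(vw m) == U_(vz m))%MM = false.
  apply/negbTE/eqP => e2; move: (mnm1E (vw m) (vz m)); rewrite e2 mnm1E eqxx.
  case: eqP => // e3 _; move: (congr1 val e3); rewrite /= val_vz val_vw; lia.
by move/eqP; rewrite oner_eq0.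
Qed.

Definition ell (bb t : M) (x : M * M) := t * x.1 + (- bb) * x.2.

Lemma final (bb : M) (p1 p2 q1 q2 : M) :
  (forall j, (j < m)%N -> [/\ indep j p1, indep j p2, indep j q1 & indep j q2]) ->
  (forall j, (j < m)%N -> indep j bb) ->
  (z - w) * pbrk m (ell bb z (chain m (p1, p2) z)) (ell bb w (chain m (q1, q2) w)) =
  - 'i%:MP * (p1 * q2 - p2 * q1) *
    (w * ell bb z (chain m (1, 0) z) * ell bb w (chain m (0, 1) w)
     - z * ell bb z (chain m (0, 1) z) * ell bb w (chain m (1, 0) w)).
Proof.
move=> hp hb.
have [E11 E12 E21 E22] := main (leqnn m) hp.
rewrite /ell pbrk_lin; try (move=> j hj; first [apply: indepN; apply: hb | apply: indep_z | apply: indep_w]; lia).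
apply: lin_comb0; [exact: E11 | exact: E12 | exact: E21 | exact: E22 | ring].
Qed.

Lemma opuc_chain' (s : C) (t : M) : Num.conj s = s -> s * s = 1 ->
  (opuc m s m).[t] = (chain m (1, s%:MP) t).1 /\
  s%:MP * (rstar m (opuc m s m)).[t] = (chain m (1, s%:MP) t).2.
Proof.
move=> hs hss; have e := @opuc_chain s m t (leqnn m) hs hss.
by split; [exact: (congr1 fst e) | exact: (congr1 snd e)].
Qed.

Lemma chain_lin1 k (p1 p2 : M) t :
  (chain k (p1, p2) t).1 = p1 * (chain k (1, 0) t).1 + p2 * (chain k (0, 1) t).1.
Proof. by rewrite chain_lin. Qed.
Lemma chain_lin2 k (p1 p2 : M) t :
  (chain k (p1, p2) t).2 = p1 * (chain k (1, 0) t).2 + p2 * (chain k (0, 1) t).2.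
Proof. by rewrite chain_lin. Qed.

Lemma Pn_e (beta : C) t : (Pn m beta).[t] =
  ell (Num.conj beta)%:MP t (chain m (1, 0) t) + ell (Num.conj beta)%:MP t (chain m (0, 1) t).
Proof.
rewrite /Pn /Phi !hornerE.
have [e1 e2] := @opuc_chain' 1 t (rmorph1 _) (mulr1 1).
rewrite chain_lin1 in e1; rewrite chain_lin2 mpolyC1 mul1r in e2.
rewrite e1 e2 /ell mpolyC1 /=; ring.
Qed.

Lemma Qn_e (beta : C) t : (Qn m beta).[t] =
  ell (Num.conj beta)%:MP t (chain m (1, 0) t) - ell (Num.conj beta)%:MP t (chain m (0, 1) t).
Proof.
rewrite /Qn /Psi !hornerE.
have [e1 e2] := @opuc_chain' (-1) t (rmorphN1 _) (etrans (mulrNN 1 1) (mulr1 1)).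
rewrite chain_lin1 in e1; rewrite chain_lin2 in e2.
have -> : (rstar m (opuc m (-1) m)).[t] = - ((-1)%:MP * (rstar m (opuc m (-1) m)).[t]).
  by rewrite mpolyCN mpolyC1; ring.
rewrite e1 e2 /ell mpolyCN mpolyC1 /=; ring.
Qed.

Lemma h2 : ((2^-1 : C)%:MP : M) * 2 = 1.
Proof.
have -> : (2 : M) = (2 : C)%:MP by rewrite mpolyC_nat.
rewrite -mpolyCM mulVf ?mpolyC1 //.
by rewrite pnatr_eq0.
Qed.

Lemma Cn_e (beta : C) t : (Cn m beta).[t] = ell (Num.conj beta)%:MP t (chain m (1, 0) t).
Proof.
rewrite /Cn hornerM hornerD hornerC Pn_e Qn_e.
set A := ell _ _ _; set B := ell _ _ _.
apply/eqP; rewrite -subr_eq0; apply/eqP.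
transitivity (((2^-1 : C)%:MP * 2 - 1) * A); first ring.
by rewrite h2 subrr mul0r.
Qed.

Lemma Sn_e (beta : C) t : (Sn m beta).[t] = ell (Num.conj beta)%:MP t (chain m (0, 1) t).
Proof.
rewrite /Sn hornerM hornerD hornerN hornerC Pn_e Qn_e.
set A := ell _ _ _; set B := ell _ _ _.
apply/eqP; rewrite -subr_eq0; apply/eqP.
transitivity (((2^-1 : C)%:MP * 2 - 1) * B); first ring.
by rewrite h2 subrr mul0r.
Qed.
End S.

Theorem theorem5p4 (C : numClosedFieldType) (n : nat) (hn : (1 <= n)%N)
    (beta : C) (hbeta : `|beta| = 1) :
  let m := n.-1 in
  let z := zz C m in
  let w := ww C m in
  let br := @pbr C m in
  let Cz := (Cn m beta).[z] in let Cw := (Cn m beta).[w] in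
  let Sz := (Sn m beta).[z] in let Sw := (Sn m beta).[w] in
  let Pz := (Pn m beta).[z] in let Pw := (Pn m beta).[w] in
  let Qz := (Qn m beta).[z] in let Qw := (Qn m beta).[w] in
  [/\ br Cz Cw = 0 /\ br Sz Sw = 0,
      (z - w) * br Cz Sw = - 'i%:MP * (Cz * (w * Sw) - Cw * (z * Sz)),
      br Pz Pw = 0 /\ br Qz Qw = 0 &
      (z - w) * br Pz Qw =
        - (('i / 2)%:MP) * ((Pz * Qw - Pw * Qz) * (z + w)
                            + (- (Qz * Qw) + Pz * Pw) * (z - w))].
Proof.
move=> m z w br Cz Cw Sz Sw Pz Pw Qz Qw.
rewrite {}/br {}/Cz {}/Cw {}/Sz {}/Sw {}/Pz {}/Pw {}/Qz {}/Qw.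
rewrite !Pn_e !Qn_e !Cn_e !Sn_e !pbr_pbrk.
set bb := (Num.conj beta)%:MP.
have hb : forall j, (j < m)%N -> indep j bb by move=> j hj; apply: indepC.
have hcc : forall j, (j < m)%N -> [/\ indep j (1 : M C m), indep j (0 : M C m), indep j (1 : M C m) & indep j (0 : M C m)].
  by move=> j hj; split; [apply: indep1 | apply: indep0 | apply: indep1 | apply: indep0].
have hcs : forall j, (j < m)%N -> [/\ indep j (1 : M C m), indep j (0 : M C m), indep j (0 : M C m) & indep j (1 : M C m)].
  by move=> j hj; split; [apply: indep1 | apply: indep0 | apply: indep0 | apply: indep1].
have hsc : forall j, (j < m)%N -> [/\ indep j (0 : M C m), indep j (1 : M C m), indep j (1 : M C m) & indep j (0 : M C m)].
  by move=> j hj; split; [apply: indep0 | apply: indep1 | apply: indep1 | apply: indep0].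
have hss : forall j, (j < m)%N -> [/\ indep j (0 : M C m), indep j (1 : M C m), indep j (0 : M C m) & indep j (1 : M C m)].
  by move=> j hj; split; [apply: indep0 | apply: indep1 | apply: indep0 | apply: indep1].
have Fcc := final hcc hb; have Fcs := final hcs hb.
have Fsc := final hsc hb; have Fss := final hss hb.
rewrite -/z -/w in Fcc Fcs Fsc Fss.
set A := ell bb z (chain m (1, 0) z) in Fcc Fcs Fsc Fss *.
set B := ell bb z (chain m (0, 1) z) in Fcc Fcs Fsc Fss *.
set A' := ell bb w (chain m (1, 0) w) in Fcc Fcs Fsc Fss *.
set B' := ell bb w (chain m (0, 1) w) in Fcc Fcs Fsc Fss *.
clearbody A B A' B'.
have hzw : z - w != 0 := zw_neq0 C m.
split.
- split; apply: (mulfI hzw); rewrite mulr0 ?Fcc ?Fss; ring.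
- rewrite Fcs; ring.
- split; apply: (mulfI hzw);
    rewrite ?pbrkDl ?pbrkDr ?pbrkNl ?pbrkNr !(mulrDr (z - w)) ?(mulrN (z - w))
      Fcc Fcs Fsc Fss mulr0; ring.
- rewrite ?pbrkDl ?pbrkDr ?pbrkNl ?pbrkNr !(mulrDr (z - w)) ?(mulrN (z - w)) Fcc Fcs Fsc Fss.
  rewrite mpolyCM.
  apply/eqP; rewrite -subr_eq0; apply/eqP.
  transitivity (((2^-1 : C)%:MP * 2 - 1) * (- (2 * 'i%:MP * (w * A * B' - z * B * A')))).
    ring.
  by rewrite h2 subrr mul0r.
Qed.
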